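(* Let $\epsilon:\mathbb{N}\to[0,\infty)$ be a non-decreasing function and let $\mathcal{A}$ be a deterministic online linear optimization algorithm on $\mathbb{R}^d$, outputting $x_t\in\mathbb{R}^d$ as a function of $g_1,\dots,g_{t-1}$, such that for every $t$ and every sequence $g_1,\dots,g_t\in\mathbb{R}^d$ with $\|g_i\|_2\le1$ we have $\sum_{i=1}^t\langle g_i,x_i\rangle\le\epsilon(t)$ (i.e. its regret against the competitor $0$ is at most $\epsilon(t)$). Then for every $T$, every sequence $g_1,\dots,g_T$ with $\|g_i\|_2\le1$ and every $t=1,\dots,T$, \[ \|x_t\|_2\le\epsilon(T)-\sum_{i=1}^{t-1}\langle g_i,x_i\rangle, \] and consequently there exists $\beta_t\in\mathbb{R}^d$ with $\|\beta_t\|_2\le1$ such that $x_t=\beta_t\left(\epsilon(T)-\sum_{i=1}^{t-1}\langle g_i,x_i\rangle\right)$. *)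

(* Defs.v *)
From HB Require Import structures.
From mathcomp Require Import all_boot all_order all_algebra.
Set Implicit Arguments. Unset Strict Implicit. Unset Printing Implicit Defensive.
Import Order.TTheory GRing.Theory Num.Theory.
Local Open Scope ring_scope.

Definition dotv {R : rcfType} {d : nat} (u v : 'rV[R]_d) : R := (u *m v^T) 0 0.

Definition norm2 {R : rcfType} {d : nat} (u : 'rV[R]_d) : R := Num.sqrt (dotv u u).

(* A deterministic online linear optimization algorithm is a map from the
   history [:: g_1; ...; g_{t-1}] of past gradients to the next point x_t. *)
Definition OLOalg (R : rcfType) (d : nat) := seq 'rV[R]_d -> 'rV[R]_d.

(* x_t for the gradient sequence g (indexed from 1): A applied to g_1..g_{t-1}. *)
Definition alg_out {R : rcfType} {d : nat} (A : OLOalg R d)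
  (g : nat -> 'rV[R]_d) (t : nat) : 'rV[R]_d :=
  A [seq g i | i <- iota 1 t.-1].

(* Main.v *)
Require Import Defs.
From HB Require Import structures.
From mathcomp Require Import all_boot all_order all_algebra.
From mathcomp Require Import zify.
Import Order.TTheory GRing.Theory Num.Theory.
Local Open Scope ring_scope.

Lemma dotvE (R : rcfType) d (u v : 'rV[R]_d) : dotv u v = \sum_j u 0 j * v 0 j.
Proof. by rewrite /dotv !mxE; apply: eq_bigr => j _; rewrite mxE. Qed.

Lemma dotv_ge0 (R : rcfType) d (u : 'rV[R]_d) : 0 <= dotv u u.
Proof. by rewrite dotvE; apply: sumr_ge0 => j _; rewrite -expr2 sqr_ge0. Qed.

Lemma dotvZl (R : rcfType) d c (u v : 'rV[R]_d) : dotv (c *: u) v = c * dotv u v.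
Proof. by rewrite !dotvE mulr_sumr; apply: eq_bigr => j _; rewrite mxE mulrA. Qed.

Lemma dotvZr (R : rcfType) d c (u v : 'rV[R]_d) : dotv u (c *: v) = c * dotv u v.
Proof. by rewrite !dotvE mulr_sumr; apply: eq_bigr => j _; rewrite mxE mulrCA. Qed.

Lemma norm2Z (R : rcfType) d c (u : 'rV[R]_d) : norm2 (c *: u) = `|c| * norm2 u.
Proof.
by rewrite /norm2 dotvZl dotvZr mulrA -expr2 sqrtrM ?sqr_ge0 // sqrtr_sqr.
Qed.

Lemma norm2_ge0 (R : rcfType) d (u : 'rV[R]_d) : 0 <= norm2 u.
Proof. exact: sqrtr_ge0. Qed.

Lemma norm2_sq (R : rcfType) d (u : 'rV[R]_d) : dotv u u = norm2 u ^+ 2.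
Proof. by rewrite /norm2 sqr_sqrtr // dotv_ge0. Qed.

Lemma norm2_eq0 (R : rcfType) d (u : 'rV[R]_d) : norm2 u = 0 -> u = 0.
Proof.
move=> h; have : dotv u u = 0 by rewrite norm2_sq h expr0n.
rewrite dotvE => /eqP; rewrite psumr_eq0; last by move=> j _; rewrite -expr2 sqr_ge0.
move=> /allP H; apply/rowP => j; rewrite mxE.
by have := H j (mem_index_enum j); rewrite /= -expr2 sqrf_eq0 => /eqP.
Qed.

Theorem mainTheorem10 (R : rcfType) (d : nat) (eps : nat -> R) (A : OLOalg R d)
  (eps_nneg : forall n : nat, 0 <= eps n)
  (eps_mono : forall m n : nat, (m <= n)%N -> eps m <= eps n)
  (regret : forall (t : nat) (g : nat -> 'rV[R]_d),
     (forall i : nat, (1 <= i <= t)%N -> norm2 (g i) <= 1) ->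
     \sum_(1 <= i < t.+1) dotv (g i) (alg_out A g i) <= eps t) :
  forall (T : nat) (g : nat -> 'rV[R]_d),
    (forall i : nat, (1 <= i <= T)%N -> norm2 (g i) <= 1) ->
    forall t : nat, (1 <= t <= T)%N ->
      norm2 (alg_out A g t)
        <= eps T - \sum_(1 <= i < t) dotv (g i) (alg_out A g i)
      /\ exists beta : 'rV[R]_d,
           norm2 beta <= 1 /\
           alg_out A g t
             = (eps T - \sum_(1 <= i < t) dotv (g i) (alg_out A g i)) *: beta.
Proof.
move=> T g hg t /andP[t1 tT].
set x := alg_out A g t.
set S := \sum_(1 <= i < t) _.
set u : 'rV[R]_d := if norm2 x == 0 then 0 else (norm2 x)^-1 *: x.
have hu1 : norm2 u <= 1.
  rewrite /u; case: eqP => h.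
    by rewrite /norm2 /dotv mul0mx mxE sqrtr0.
  rewrite norm2Z ger0_norm ?invr_ge0 ?norm2_ge0 // mulVf //; exact/eqP.
have hux : dotv u x = norm2 x.
  rewrite /u; case: eqP => h.
    by rewrite h /dotv mul0mx mxE.
  by rewrite dotvZl norm2_sq expr2 mulKf //; apply/eqP.
pose g' i := if (i < t)%N then g i else if i == t then u else 0.
have halg : forall i, (i <= t)%N -> alg_out A g' i = alg_out A g i.
  move=> i hi; rewrite /alg_out; congr A; apply/eq_in_map => j.
  rewrite mem_iota => /andP[_ hj]; rewrite /g' ifT //; lia.
have key : S + norm2 x <= eps T.
  apply: le_trans (eps_mono _ _ tT).
  have := regret t g' _.
  have -> : \sum_(1 <= i < t.+1) dotv (g' i) (alg_out A g' i) = S + norm2 x.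
    rewrite big_nat_recr //= /g' ltnn eqxx halg // -/x hux; congr (_ + _).
    apply: eq_big_nat => i /andP[_ hi]; rewrite ifT // halg //; lia.
  apply => i /andP[i1 it]; rewrite /g'; case: ltnP => h.
    apply: hg; lia.
  have -> : i = t by lia.
  by rewrite eqxx.
have hle : norm2 x <= eps T - S by rewrite lerBrDl.
split => //.
have [E0|En0] := eqVneq (eps T - S) 0.
  exists 0; split; first by rewrite /norm2 /dotv mul0mx mxE sqrtr0.
  rewrite E0 scale0r; apply: norm2_eq0; apply/eqP; rewrite eq_le norm2_ge0 andbT.
  by rewrite -E0.
exists ((eps T - S)^-1 *: x); split; last by rewrite scalerA mulfV // scale1r.
rewrite norm2Z ger0_norm; last by rewrite invr_ge0 (le_trans (norm2_ge0 _ _ x)).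
have Ep : 0 < eps T - S by rewrite lt_def En0 (le_trans (norm2_ge0 _ _ x)).
by rewrite mulrC ler_pdivrMr // mul1r.
Qed.
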